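(* Let $t\ge1$ and $D\ge1$ be integers. Let $X,Y$ be a section-pair having $3t$ pairwise-interlacing chords whose lengths all belong to an interval of size $D$. Then there are paths $P_1,\dots,P_t$ in $H(X,Y)$ between $x^{t}$ and $y^{t}$ such that $1\le |P_{i+1}|-|P_i|\le 2D$ for every $1\le i\le t-1$. In particular $|P_t|\ge |P_1|+t-1$.
   Context: A section-pair in a graph $G$ is a pair $X,Y$ of vertex-disjoint paths; the two endpoints of $X$ are designated its top $x^{t}$ and bottom $x^{b}$, and those of $Y$ its top $y^t$ and bottom $y^b$. For distinct $x_1,x_2\in X$, $x_1$ is above $x_2$ if $x_1$ is closer to $x^t$ along $X$ than $x_2$, otherwise below; similarly in $Y$. A chord is an edge of $G$ with one endpoint in $X$ and one in $Y$. $H(X,Y)$ is the graph with vertex set $V(X)\cup V(Y)$ whose edges are the edges of $X$, the edges of $Y$ and the chords. $|P|$ is the number of edges of a path $P$; $d_X(x_1,x_2)$ is the number of edges of the subpath of $X$ between $x_1,x_2$, similarly $d_Y$. The length of a chord $(x,y)$, $x\in X,y\in Y$, is $d_X(x^t,x)+d_Y(y^t,y)$. Two chords $(x_1,y_1),(x_2,y_2)$ with no common vertex are parallel if for some $i\in\{1,2\}$, $x_i$ is above $x_{3-i}$ and $y_i$ is above $y_{3-i}$; otherwise they are interlacing. An interval is a set of consecutive integers; its size is its number of elements. *)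

(* Defs.v *)
From mathcomp Require Import all_boot.
Set Implicit Arguments. Unset Strict Implicit. Unset Printing Implicit Defensive.

Section Defs.
Variable T : finType.

Definition simple_graph (e : rel T) : Prop := symmetric e /\ irreflexive e.

Definition is_path (e : rel T) (p : seq T) : Prop :=
  match p with
  | [::] => False
  | a :: q => path e a q /\ uniq p
  end.

Definition plen (p : seq T) : nat := (size p).-1.

(* Section-pair: X, Y vertex-disjoint paths of G; the top of X is the head of
   the sequence X, its bottom is the last element (similarly for Y). *)
Definition section_pair (e : rel T) (X Y : seq T) : Prop :=
  is_path e X /\ is_path e Y /\ [disjoint X & Y].

Definition chord (e : rel T) (X Y : seq T) (c : T * T) : bool :=
  [&& c.1 \in X, c.2 \in Y & e c.1 c.2].

(* Length of a chord: d_X(x^t, x) + d_Y(y^t, y) (positions along the paths). *)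
Definition chord_length (X Y : seq T) (c : T * T) : nat :=
  index c.1 X + index c.2 Y.

Definition interlacing (X Y : seq T) (c d : T * T) : bool :=
  [&& c.1 != d.1, c.2 != d.2,
      ~~ ((index c.1 X < index d.1 X) && (index c.2 Y < index d.2 Y)) &
      ~~ ((index d.1 X < index c.1 X) && (index d.2 Y < index c.2 Y))].

Definition consecutive (S : seq T) (u v : T) : bool :=
  [&& u \in S, v \in S &
      (index v S == (index u S).+1) || (index u S == (index v S).+1)].

Definition H_edge (e : rel T) (X Y : seq T) (u v : T) : bool :=
  [|| consecutive X u v, consecutive Y u v,
      [&& u \in X, v \in Y & e u v] | [&& v \in X, u \in Y & e u v]].

Definition H_path_between (e : rel T) (X Y : seq T) (a b : T) (P : seq T) : Prop :=
  is_path (H_edge e X Y) P /\ all (fun v => v \in X ++ Y) P /\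
  head a P = a /\ last a P = b.

End Defs.

(* Main.v *)
Require Import Defs.
From mathcomp Require Import all_boot.
From mathcomp Require Import all_boot all_order all_algebra.
From mathcomp Require Import zify.
From Stdlib Require Import Classical.
Set Implicit Arguments. Unset Strict Implicit. Unset Printing Implicit Defensive.
Import Order.TTheory GRing.Theory Num.Theory.

Section Comb.
Variable A : eqType.
Variable l : A -> nat.

Fixpoint alt (s : seq A) : int := if s is x :: r then (l x)%:Z - alt r else 0%R.
Definition fv (s : seq A) : int := ((size s)%:Z + alt s)%R.

Lemma alt_cat s1 s2 : alt (s1 ++ s2) =
  (alt s1 + (if odd (size s1) then - alt s2 else alt s2))%R.
Proof.
elim: s1 => [|x s1 IH] /=; first by rewrite add0r.
rewrite IH; case: (odd (size s1)) => /=; lia.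
Qed.

Lemma fv_cons2 c u r : fv (c :: u :: r) = (fv r + 2 + (l c)%:Z - (l u)%:Z)%R.
Proof. rewrite /fv /=; lia. Qed.

Lemma fv1 c : fv [:: c] = ((l c)%:Z + 1)%R.
Proof. rewrite /fv /=; lia. Qed.

Lemma subseq_cat_split (s L1 L2 : seq A) : subseq s (L1 ++ L2) ->
  exists s1 s2, s = s1 ++ s2 /\ subseq s1 L1 /\ subseq s2 L2.
Proof.
elim: L1 s => [|x L1 IH] s.
  by move=> H; exists [::], s; rewrite sub0seq.
case: s => [|y s] H.
  by exists [::], [::]; rewrite !sub0seq.
move: H; rewrite cat_cons /=; case: (y =P x) => [E | _] H.
  subst y; have [s1 [s2 [-> [H1 H2]]]] := IH _ H.
  by exists (x :: s1), s2; rewrite /= eqxx.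
have [s1 [s2 [E [H1 H2]]]] := IH _ H.
exists s1, s2; split=> //; split=> //.
exact: subseq_trans H1 (subseq_cons _ _).
Qed.

Lemma subseq_cons2 (x : A) s1 s2 : subseq s1 s2 -> subseq (x :: s1) (x :: s2).
Proof. by move=> H; rewrite -(cat1s x s1) -(cat1s x s2) subseq_cat2l. Qed.

Definition sdec x y := (l y).+2 <= l x.

Lemma sdec_trans : transitive sdec.
Proof. rewrite /sdec => y x z H1 H2; lia. Qed.

Lemma decomp (L : seq A) : 1 < size L -> exists L1 x y L2,
  L = L1 ++ x :: y :: L2 /\ (L1 = [::] \/ l x <= (l y).+1) /\ path sdec y L2.
Proof.
elim: L => [|z L0 IH] //=.
case: L0 IH => [|x L0] IH //= _.
case: L0 IH => [|y' L0'] IH.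
  by exists [::], z, x, [::]; split=> //; split; [left|].
have [L1 [x1 [y1 [L2 [E [H1 H2]]]]]] := IH isT.
case: H1 => [E1|Hup].
  subst L1; case: E => ? ? ?; subst x1 y1 L2.
  case: (leqP (l x) (l y').+1) => Hxy.
    exists [:: z], x, y', L0'; split=> //; split=> //; by right.
  exists [::], z, x, (y' :: L0'); split=> //; split; first by left.
  by rewrite /= H2 andbT /sdec.
exists (z :: L1), x1, y1, L2; rewrite E; split=> //; split=> //; by right.
Qed.

Lemma reduce (L : seq A) : 1 < size L -> exists L', subseq L' L /\ (size L').+2 = size L /\
  forall s', subseq s' L' -> odd (size s') ->
  exists s, subseq s L /\ odd (size s) /\ (fv s' < fv s)%R.
Proof.
move=> /decomp [L1 [x [y [L2 [-> [Hup Hp]]]]]].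
exists (L1 ++ L2); split.
  apply: cat_subseq (subseq_refl _) _.
  exact: subseq_trans (subseq_cons _ _) (subseq_cons _ _).
split; first by rewrite !size_cat /= !addnS.
move=> s' /subseq_cat_split [s1 [s2 [-> [H1 H2]]]] Hodd.
case Eo: (odd (size s1)).
  case: Hup => [E|Hup].
    by move: H1 Eo; rewrite E subseq0 => /eqP ->.
  exists (s1 ++ x :: y :: s2); split.
    by apply: cat_subseq H1 _; do 2 apply: subseq_cons2.
  split; first by move: Hodd; rewrite !size_cat /= !addnS /= negbK.
  rewrite /fv !alt_cat Eo !size_cat /= !addnS.
  lia.
case: s2 H2 Hodd => [|z s2] H2 Hodd.
  by move: Hodd; rewrite cats0 Eo.
have zL2 : z \in L2 by apply: (mem_subseq H2); rewrite inE eqxx.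
have H2' : subseq s2 L2 by apply: subseq_trans (subseq_cons _ _) H2.
have Hyz : sdec y z.
  by move: (order_path_min sdec_trans Hp) => /allP; apply.
exists (s1 ++ y :: s2); split.
  apply: cat_subseq H1 _.
  apply: subseq_trans (subseq_cons _ x); exact: subseq_cons2.
split; first by move: Hodd; rewrite !size_cat.
rewrite /fv !alt_cat Eo !size_cat /=.
move: Hyz; rewrite /sdec; lia.
Qed.


Lemma alt_bound (U : nat) s : all (fun x => l x < U) s ->
  (- ((size s * U)%:Z) <= alt s <= (size s * U)%:Z)%R.
Proof.
elim: s => [|x s IH] /=; first by rewrite mul0n.
move=> /andP [Hx /IH]; rewrite mulSn; lia.
Qed.

Lemma int_max (P : int -> Prop) (B : int) : (exists x, P x) ->
  (forall x, P x -> (x <= B)%R) -> exists m, P m /\ forall x, P x -> (x <= m)%R.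
Proof.
move=> [x0 Hx0] HB.
suff: forall n : nat, forall x, P x -> (B - x <= n%:Z)%R ->
  exists m, P m /\ forall x, P x -> (x <= m)%R.
  apply; first exact: Hx0.
  have := HB _ Hx0; instantiate (1 := `|B - x0|%N); lia.
elim=> [|n IH] x Px Hn.
  exists x; split=> // y Py; have := HB _ Py; lia.
case: (classic (exists y, P y /\ (x < y)%R)) => [[y [Py Hy]]|Hno].
  apply: (IH y Py); lia.
exists x; split=> // y Py; rewrite leNgt; apply/negP => Hy.
by apply: Hno; exists y.
Qed.

Variables (a D : nat).
Definition inr x := a <= l x < a + D.

Lemma exists_max (L : seq A) : all inr L -> L != [::] -> exists s, subseq s L /\ odd (size s) /\
  forall s', subseq s' L -> odd (size s') -> (fv s' <= fv s)%R.
Proof.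
move=> Hr; case: L Hr => [|x0 L] // Hr _.
pose P := (fun v => exists s, subseq s (x0 :: L) /\ odd (size s) /\ fv s = v).
have HP : exists v, P v.
  exists (fv [:: x0]), [:: x0]; split=> //; by rewrite sub1seq mem_head.
have HB : forall v, P v -> (v <= ((size (x0 :: L)) * (a + D).+1)%:Z)%R.
  move=> v [s [Hs [Ho <-]]].
  have HU : all (fun x => l x < a + D) s.
    apply/allP => y /(mem_subseq Hs) Hy.
    by move: Hr => /allP /(_ y Hy) /andP [].
  have := alt_bound HU; have := size_subseq Hs; rewrite /fv.
  set n := size (x0 :: L); set k := size s => Hk Hb.
  have : k * (a + D).+1 <= n * (a + D).+1 by rewrite leq_mul2r Hk orbT.
  rewrite !mulnS; lia.
have [m [[s [Hs [Ho Em]]] Hm]] := int_max HP HB.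
exists s; split=> //; split=> // s' H1 H2; rewrite Em; apply: Hm; by exists s'.
Qed.


Lemma gap (s : seq A) (v : int) : all inr s -> odd (size s) ->
  (a%:Z + 1 <= v)%R -> (v < fv s)%R -> exists s', subseq s' s /\ odd (size s') /\
  (v < fv s')%R /\ (fv s' <= v + D%:Z + 1)%R.
Proof.
move: {2}(size s) (leqnn (size s)) => n; elim: n s => [|n IH] s.
  by rewrite leqn0 => /eqP /size0nil ->.
case: s => [|c [|u r]] // Hn.
  move=> /andP [/andP [H1 H2] _] _ Hv Hf; exists [:: c]; split; first exact: subseq_refl.
  split=> //; split=> //; rewrite fv1; lia.
move=> /andP [/andP [Hc1 Hc2] /andP [/andP [Hu1 Hu2] Hr]] Ho Hv Hf.
have {}Ho : odd (size r) by move: Ho => /=; rewrite negbK.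
case: (ltrP v (fv r)) => Hvr.
  have [s' [Hs' Hrest]] := IH r (ltnW Hn) Hr Ho Hv Hvr.
  exists s'; split; last exact: Hrest.
  apply: subseq_trans Hs' _; apply: subseq_trans (subseq_cons _ u) (subseq_cons _ c).
exists [:: c, u & r]; split; first exact: subseq_refl.
split; first by rewrite /= negbK.
split=> //; move: Hf; rewrite !fv_cons2; lia.
Qed.

Definition chainP (L : seq A) (k : nat) (g : nat -> seq A) :=
  (forall i, i <= k -> subseq (g i) L /\ odd (size (g i)) /\ (a%:Z + 1 <= fv (g i))%R) /\
  (forall i, i < k -> (fv (g i) + 1 <= fv (g i.+1) <= fv (g i) + D%:Z + 1)%R).

Lemma climb (L : seq A) (m : int) (s0 : seq A) : all inr L ->
  (forall s, subseq s L -> odd (size s) -> (fv s <= m)%R) ->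
  (exists sm, subseq sm L /\ odd (size sm) /\ fv sm = m) ->
  subseq s0 L -> odd (size s0) -> (a%:Z + 1 <= fv s0)%R -> (fv s0 < m)%R ->
  exists k (g : nat -> seq A), 0 < k /\ g 0 = s0 /\ chainP L k g /\ fv (g k) = m.
Proof.
move=> Hr Hm [sm [Hsm [Hosm Esm]]] Hs0 Ho0 Ha0 Hlt.
have HrS : all inr sm.
  by apply/allP => y /(mem_subseq Hsm) Hy; move: Hr => /allP; apply.
suff: forall n s0, (m - fv s0 <= n%:Z)%R -> subseq s0 L -> odd (size s0) ->
  (a%:Z + 1 <= fv s0)%R -> (fv s0 < m)%R ->
  exists k (g : nat -> seq A), 0 < k /\ g 0 = s0 /\ chainP L k g /\ fv (g k) = m.
  move=> H; apply: (H `|m - fv s0|%N) => //; lia.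
clear s0 Hs0 Ho0 Ha0 Hlt.
elim=> [|n IH] s0 Hn Hs0 Ho0 Ha0 Hlt; first lia.
have [s1 [Hs1 [Ho1 [Hv1 Hv1']]]] := gap HrS Hosm Ha0 ltac:(by rewrite Esm).
have Hs1L : subseq s1 L := subseq_trans Hs1 Hsm.
have Hle := Hm _ Hs1L Ho1.
case: (ltrP (fv s1) m) => Hlt1.
  have [k [g [Hk [Hg0 [[Hc1 Hc2] Hgk]]]]] := IH s1 ltac:(lia) Hs1L Ho1 ltac:(lia) Hlt1.
  exists k.+1, (fun i => if i is i'.+1 then g i' else s0); split=> //; split=> //.
  split=> //; split.
    case=> [|i] Hi; first by split=> //.
    exact: Hc1.
  case=> [|i] Hi /=; first by rewrite Hg0; lia.
  exact: Hc2.
exists 1, (fun i => if i is i'.+1 then s1 else s0); split=> //; split=> //.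
split; last lia.
split.
  case=> [|i] Hi; first by split=> //.
  by split=> //; split=> //; lia.
case=> [|i] Hi //=; lia.
Qed.

Lemma chain (L : seq A) : all inr L -> L != [::] -> exists k (g : nat -> seq A) (m : int),
  (forall s, subseq s L -> odd (size s) -> (fv s <= m)%R) /\ fv (g k) = m /\
  chainP L k g /\ size L <= k.*2.+2.
Proof.
move: {2}(size L) (leqnn (size L)) => n; elim: n L => [|n IH] L.
  by rewrite leqn0 => /eqP /size0nil ->.
move=> Hn Hr HL.
have [sm [Hsm [Hosm Hmax]]] := exists_max Hr HL.
have Ha : (a%:Z + 1 <= fv sm)%R.
  case: L Hr HL Hsm Hmax Hn => [|x L] // /andP [/andP [Hx _] _] _ Hsm Hmax _.
  have := Hmax [:: x]; rewrite sub1seq mem_head fv1 => /(_ isT isT); lia.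
case: (leqP (size L) 2) => Hs.
  exists 0, (fun _ => sm), (fv sm); split=> //; split=> //; split=> //.
have [L' [HL' [HsL' Hred]]] := reduce (ltnW Hs).
have Hr' : all inr L'.
  by apply/allP => y /(mem_subseq HL') Hy; move: Hr => /allP; apply.
have HL'0 : L' != [::] by apply/eqP => E; move: HsL' Hs; rewrite E /= => <-.
have [k [g [m' [Hm' [Hgk [[Hc1 Hc2] Hsz]]]]]] := IH L' ltac:(lia) Hr' HL'0.
have [Hgs [Hgo Hga]] := Hc1 k (leqnn k).
have [s [Hs1 [Hs2 Hs3]]] := Hred _ Hgs Hgo.
have HgL : subseq (g k) L := subseq_trans Hgs HL'.
have Hlt : (fv (g k) < fv sm)%R by have := Hmax _ Hs1 Hs2; move: Hs3; clear; lia.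
have [k2 [g2 [Hk2 [Hg20 [[Hd1 Hd2] Hg2k]]]]] :=
  climb Hr Hmax (ex_intro _ sm (conj Hsm (conj Hosm erefl))) HgL Hgo Hga Hlt.
exists (k + k2), (fun i => if i <= k then g i else g2 (i - k)), (fv sm).
split=> //; split.
  by rewrite leqNgt -addn1 leq_add2l Hk2 /= addKn.
split; last by move: Hsz HsL' Hk2; clear; rewrite doubleD; lia.
split.
  move=> i Hi; case: ifP => Hik.
    have [H1 H2] := Hc1 i Hik; split=> //; exact: subseq_trans H1 HL'.
  apply: Hd1; move: Hi Hik; clear; lia.
move=> i Hi; case: (ltnP i k) => Hik.
  rewrite (ltnW Hik); exact: Hc2.
case: (eqVneq i k) => [E|Hne].
  subst i; rewrite leqnn subSnn -Hg20; exact: Hd2 0 Hk2.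
rewrite ifN; last by move: Hik Hne; clear; lia.
have -> : i.+1 - k = (i - k).+1 by move: Hik; clear; lia.
apply: Hd2; move: Hi Hik Hne; clear; lia.
Qed.

End Comb.

Section Idx.
Variable A : eqType.
Variables (nX nY : nat) (px py : A -> nat) (adj : rel (bool * nat)).
Hypothesis HX : forall k, k.+1 < nX -> adj (true, k) (true, k.+1).
Hypothesis HY : forall k, k.+1 < nY -> adj (false, k.+1) (false, k).

Fixpoint segX (i n : nat) : seq (bool * nat) :=
  if n is n'.+1 then (true, i.+1) :: segX i.+1 n' else [::].
Fixpoint segY (j n : nat) : seq (bool * nat) :=
  if n is n'.+1 then (false, j.-1) :: segY j.-1 n' else [::].

Lemma size_segX i n : size (segX i n) = n.
Proof. by elim: n i => [|n IH] i //=; rewrite IH. Qed.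
Lemma size_segY j n : size (segY j n) = n.
Proof. by elim: n j => [|n IH] j //=; rewrite IH. Qed.

Lemma last_segX i n : last (true, i) (segX i n) = (true, i + n).
Proof. by elim: n i => [|n IH] i /=; rewrite ?addn0 // IH addSnnS. Qed.
Lemma last_segY j n : n <= j -> last (false, j) (segY j n) = (false, j - n).
Proof.
elim: n j => [|n IH] j /=; first by rewrite subn0.
by move=> Hn; rewrite IH; [congr pair; lia | lia].
Qed.

Lemma path_segX i n : i + n < nX -> path adj (true, i) (segX i n).
Proof.
elim: n i => [|n IH] i //= H.
by rewrite HX ?IH //; lia.
Qed.
Lemma path_segY j n : n <= j -> j < nY -> path adj (false, j) (segY j n).
Proof.
elim: n j => [|n IH] j //= H1 H2.
have -> : j = j.-1.+1 by lia.
rewrite HY /=; last lia.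
by rewrite IH //; lia.
Qed.

Definition inX lo hi (u : bool * nat) := u.1 && (lo <= u.2 <= hi).
Definition inY lo hi (u : bool * nat) := ~~ u.1 && (lo <= u.2 <= hi).

Lemma segX_all i n : all (inX i.+1 (i + n)) (segX i n) /\ uniq ((true, i) :: segX i n).
Proof.
elim: n i => [|n IH] i; first by split.
have [H1 H2] := IH i.+1.
have Hall : all (inX i.+1 (i + n.+1)) (segX i n.+1).
  rewrite [segX i n.+1]/=; apply/andP; split; first by rewrite /inX /=; lia.
  apply: sub_all H1 => u; rewrite /inX => /andP [-> H] /=; lia.
split=> //.
rewrite cons_uniq; apply/andP; split.
  by apply/negP => /(allP Hall); rewrite /inX /=; lia.
by rewrite [segX i n.+1]/=; exact: H2.
Qed.

Lemma segY_all j n : n <= j -> all (inY (j - n) j.-1) (segY j n) /\ uniq ((false, j) :: segY j n).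
Proof.
elim: n j => [|n IH] j Hn; first by split.
have [H1 H2] := IH j.-1 ltac:(lia).
have Hall : all (inY (j - n.+1) j.-1) (segY j n.+1).
  rewrite [segY j n.+1]/=; apply/andP; split; first by rewrite /inY /=; lia.
  apply: sub_all H1 => u; rewrite /inY => /andP [-> H] /=; lia.
split=> //.
rewrite cons_uniq; apply/andP; split.
  by apply/negP => /(allP Hall); rewrite /inY /=; lia.
by rewrite [segY j n.+1]/=; exact: H2.
Qed.

Lemma Xpart x0 n : x0 + n < nX ->
  [/\ all (inX x0 (x0 + n)) ((true, x0) :: segX x0 n), uniq ((true, x0) :: segX x0 n),
      path adj (true, x0) (segX x0 n) & last (true, x0) (segX x0 n) = (true, x0 + n)].
Proof.
move=> H; have [H1 H2] := segX_all x0 n.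
split=> //; last exact: last_segX.
  rewrite /= {1}/inX /= leqnn leq_addr /=.
  apply: sub_all H1 => u; rewrite /inX => /andP [-> ?] /=; lia.
exact: path_segX.
Qed.

Lemma Ypart j n : n <= j -> j < nY ->
  [/\ all (inY (j - n) j) ((false, j) :: segY j n), uniq ((false, j) :: segY j n),
      path adj (false, j) (segY j n) & last (false, j) (segY j n) = (false, j - n)].
Proof.
move=> H H'; have [H1 H2] := segY_all H.
split=> //; last exact: last_segY.
  rewrite /= {1}/inY /= leqnn leq_subr /=.
  apply: sub_all H1 => u; rewrite /inY => /andP [-> ?] /=; lia.
exact: path_segY.
Qed.

Lemma uniq_cat_dis (p1 p2 : seq (bool * nat)) P1 P2 :
  uniq p1 -> uniq p2 -> all P1 p1 -> all P2 p2 -> (forall u, P1 u -> P2 u -> False) ->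
  uniq (p1 ++ p2).
Proof.
move=> U1 U2 A1 A2 H; rewrite cat_uniq U1 U2 andbT /=.
apply/hasPn => u /(allP A2) Hu; apply/negP => /(allP A1) Hu'; exact: H u Hu' Hu.
Qed.

Fixpoint Qi (x0 : nat) (s : seq A) : seq (bool * nat) :=
  match s with
  | [::] => [::]
  | [:: c] => (true, x0) :: segX x0 (px c - x0) ++ (false, py c) :: segY (py c) (py c)
  | c :: d :: r => (true, x0) :: segX x0 (px c - x0) ++
                   (false, py c) :: segY (py c) (py c - py d) ++ Qi (px d) r
  end.

Lemma Qi1 x0 c : Qi x0 [:: c] =
  (true, x0) :: (segX x0 (px c - x0) ++ (false, py c) :: segY (py c) (py c)).
Proof. reflexivity. Qed.

Lemma Qi2 x0 c d r : Qi x0 [:: c, d & r] = (true, x0) :: (segX x0 (px c - x0) ++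
    (false, py c) :: (segY (py c) (py c - py d) ++ Qi (px d) r)).
Proof. reflexivity. Qed.

Definition Rch (c d : A) := (px c < px d) && (py d < py c).
Definition okc (c : A) := [&& adj (true, px c) (false, py c), adj (false, py c) (true, px c),
  px c < nX & py c < nY].
Definition hpy (s : seq A) := if s is c :: _ then py c else 0.
Definition hpx (s : seq A) := if s is c :: _ then px c else 0.

Lemma Qi_ok n : forall s x0, size s <= n -> odd (size s) -> sorted Rch s -> all okc s ->
  x0 <= hpx s ->
  exists tl, [/\ Qi x0 s = (true, x0) :: tl, path adj (true, x0) tl,
    last (true, x0) tl = (false, 0), uniq (Qi x0 s) &
    all (fun u => inX x0 nX.-1 u || inY 0 (hpy s) u) (Qi x0 s) /\
    ((size (Qi x0 s))%:Z + x0%:Z = fv (fun c => px c + py c) s + 1)%R].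
Proof.
elim: n => [|n IH] s x0; first by case: s.
case: s => [|c [|d r]] //.
  move=> _ _ _ /andP [/and4P [Hc1 Hc2 Hc3 Hc4] _] Hx0.
  rewrite /= in Hx0.
  clear IH.
  have E1 : x0 + (px c - x0) = px c by rewrite subnKC.
  have [A1 U1 Pa1 L1] := @Xpart x0 (px c - x0) ltac:(by rewrite E1).
  have [A2 U2 Pa2 L2] := @Ypart (py c) (py c) (leqnn _) Hc4.
  rewrite Qi1.
  exists (segX x0 (px c - x0) ++ (false, py c) :: segY (py c) (py c)).
  rewrite E1 in A1 L1.
  split=> //.
  - by rewrite cat_path Pa1 L1 /= Hc1 Pa2.
  - by rewrite last_cat L1 /= L2 subnn.
  - rewrite -cat_cons; apply: (uniq_cat_dis U1 U2 A1 A2).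
    by move=> [[] k]; rewrite /inX /inY.
  split.
    rewrite -cat_cons all_cat; apply/andP; split.
      by apply: sub_all A1 => -[[] k]; rewrite /inX /inY /=; lia.
    by apply: sub_all A2 => -[[] k]; rewrite /inX /inY /=; lia.
  rewrite -cat_cons size_cat /= size_segX size_segY fv1; lia.
move=> Hn Ho Hs Hok Hx0.
have /andP [/andP [Rcd1 Rcd2] {}Hs] : Rch c d && path Rch d r := Hs.
have /andP [/and4P [Hc1 Hc2 Hc3 Hc4] /andP [/and4P [Hd1 Hd2 Hd3 Hd4] {}Hok]] :
  okc c && (okc d && all okc r) := Hok.
rewrite /= in Hx0.
case: r Hn Ho Hs Hok => [|e r'] // Hn Ho Hs Hok.
have /andP [/andP [Rde1 Rde2] Hs'] : Rch d e && path Rch e r' := Hs.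
have Hn' : size (e :: r') <= n by move: Hn; rewrite /= !ltnS; exact: ltnW.
have Ho' : odd (size (e :: r')) by move: Ho; rewrite /= !negbK.
have Hx' : px d <= hpx (e :: r') by rewrite /=; exact: ltnW Rde1.
have [tl' [EQ' Pa' La' U' [Al' Sz']]] := IH (e :: r') (px d) Hn' Ho' Hs' Hok Hx'.
clear IH.
have E1 : x0 + (px c - x0) = px c by rewrite subnKC.
have [A1 U1 Pa1 L1] := @Xpart x0 (px c - x0) ltac:(by rewrite E1).
have [A2 U2 Pa2 L2] := @Ypart (py c) (py c - py d) (leq_subr _ _) Hc4.
rewrite E1 in A1 L1.
have E2 : py c - (py c - py d) = py d by rewrite subKn // ltnW.
rewrite E2 in A2 L2.
rewrite Qi2.
set Q := Qi (px d) (e :: r') in EQ' Pa' La' U' Al' Sz' *.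
exists (segX x0 (px c - x0) ++ (false, py c) :: (segY (py c) (py c - py d) ++ Q)).
split=> //.
- rewrite cat_path Pa1 L1 /= Hc1 cat_path Pa2 L2 EQ' /= Hd2 /=; exact: Pa'.
- by rewrite last_cat L1 /= last_cat L2 EQ' /= La'.
- have A3 : all (fun u => inY (py d) (py c) u || (inX (px d) nX.-1 u || inY 0 (py e) u))
      ((false, py c) :: segY (py c) (py c - py d) ++ Q).
    rewrite -cat_cons all_cat; apply/andP; split.
      by apply: sub_all A2 => u ->.
    by apply: sub_all Al' => u ->; rewrite orbT.
  rewrite -cat_cons; apply: (uniq_cat_dis U1 _ A1 A3).
    rewrite -cat_cons; apply: (uniq_cat_dis U2 U' A2 Al').
    by move=> [[] k]; rewrite /inX /inY /=; clear - Rde2; lia.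
  by move=> [[] k]; rewrite /inX /inY /=; clear - Rcd1; lia.
split.
  rewrite -cat_cons all_cat; apply/andP; split.
    by apply: sub_all A1 => -[[] k]; rewrite /inX /inY /=; clear - Hc3; lia.
  rewrite -cat_cons all_cat; apply/andP; split.
    by apply: sub_all A2 => -[[] k]; rewrite /inX /inY /=; clear; lia.
  by apply: sub_all Al' => -[[] k]; rewrite /inX /inY /=; clear - Rcd1 Rcd2 Hx0 Rde2; lia.
rewrite -cat_cons size_cat /= size_cat /= size_segX size_segY fv_cons2.
move: Sz'; clear - Hx0 Rcd2; lia.
Qed.

End Idx.

Lemma index_inj_mem (T : eqType) (X : seq T) u v :
  u \in X -> v \in X -> index u X = index v X -> u = v.
Proof. by move=> Hu Hv E; rewrite -(nth_index u Hu) E nth_index. Qed.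

Lemma path_sub_uniq (T : eqType) (r1 r2 : rel T) x s : uniq (x :: s) ->
  (forall p q, p \in x :: s -> q \in x :: s -> p != q -> r1 p q -> r2 p q) ->
  path r1 x s -> path r2 x s.
Proof.
elim: s x => [|y s IH] x //= /andP [Hx Hu] H /andP [H1 H2].
apply/andP; split.
  apply: H => //; rewrite ?inE ?eqxx ?orbT //.
  by apply/eqP => E; move: Hx; rewrite E inE eqxx.
apply: IH => // p q Hp Hq; apply: H; rewrite inE ?Hp ?Hq orbT //.
Qed.

Section Graph.
Variables (T : finType) (e : rel T) (X Y : seq T) (dx dy : T).
Hypotheses (uX : uniq X) (uY : uniq Y) (dXY : [disjoint X & Y]).

Definition vtx (u : bool * nat) := if u.1 then nth dx X u.2 else nth dy Y u.2.
Definition gadj (u v : bool * nat) := H_edge e X Y (vtx u) (vtx v).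

Lemma gHX k : k.+1 < size X -> gadj (true, k) (true, k.+1).
Proof.
move=> Hk; rewrite /gadj /vtx /= /H_edge /consecutive !mem_nth ?(ltnW Hk) //.
by rewrite !index_uniq ?(ltnW Hk) // eqxx.
Qed.

Lemma gHY k : k.+1 < size Y -> gadj (false, k.+1) (false, k).
Proof.
move=> Hk; rewrite /gadj /vtx /= /H_edge /consecutive !mem_nth ?(ltnW Hk) //.
by rewrite !index_uniq ?(ltnW Hk) // eqxx !orbT.
Qed.

Lemma vtx_inj u v :
  (if u.1 then u.2 < size X else u.2 < size Y) ->
  (if v.1 then v.2 < size X else v.2 < size Y) -> vtx u = vtx v -> u = v.
Proof.
case: u v => [[] i] [[] j] /= Hi Hj; rewrite /vtx /=.
- by move/eqP; rewrite nth_uniq // => /eqP ->.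
- move=> E; have : nth dx X i \in X by rewrite mem_nth.
  rewrite E => HX; have HY : nth dy Y j \in Y by rewrite mem_nth.
  by rewrite (disjointFr dXY HX) in HY.
- move=> E; have : nth dy Y i \in Y by rewrite mem_nth.
  rewrite E => HY; have HX : nth dx X j \in X by rewrite mem_nth.
  by rewrite (disjointFr dXY HX) in HY.
- by move/eqP; rewrite nth_uniq // => /eqP ->.
Qed.

Definition gpx (p : T * T) := index p.1 X.
Definition gpy (p : T * T) := index p.2 Y.

Lemma gpath (s : seq (T * T)) : odd (size s) -> sorted (Rch gpx gpy) s ->
  all (okc (size X) (size Y) gpx gpy gadj) s ->
  [/\ is_path (H_edge e X Y) (map vtx (Qi gpx gpy 0 s)),
      all (fun v => v \in X ++ Y) (map vtx (Qi gpx gpy 0 s)),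
      head dx (map vtx (Qi gpx gpy 0 s)) = nth dx X 0,
      last dx (map vtx (Qi gpx gpy 0 s)) = nth dy Y 0 &
      Posz (plen (map vtx (Qi gpx gpy 0 s))) = fv (fun c => gpx c + gpy c) s].
Proof.
move=> Ho Hs Hok.
have [tl [EQ Pa La U [Al Sz]]] :=
  @Qi_ok _ (size X) (size Y) gpx gpy gadj gHX gHY (size s) s 0 (leqnn _) Ho Hs Hok (leq0n _).
have Hhp : hpy gpy s < size Y.
  by case Es: s Ho Hok => [|c s'] //= _ /andP [/and4P [_ _ _ ->]].
have HX0 : 0 < size X.
  case Es: s Ho Hok => [|c s'] //= _ /andP [/and4P [_ _ H _]].
  by move: H; clear; lia.
have Hrng : forall u, u \in Qi gpx gpy 0 s ->
    (if u.1 then u.2 < size X else u.2 < size Y).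
  move=> [b k] /(allP Al); rewrite /inX /inY /=.
  case: b => /=; rewrite ?andbF ?orbF ?andbT //= => H; lia.
split.
- rewrite EQ map_cons; split.
    by rewrite path_map; exact: Pa.
  rewrite -map_cons -EQ (map_inj_in_uniq _) //.
  move=> u v Hu Hv; apply: vtx_inj; exact: Hrng.
- apply/allP => v /mapP [u /Hrng Hu ->]; rewrite mem_cat.
  case: u Hu => [[] k] /= Hk; rewrite /vtx /= mem_nth //.
  by rewrite orbT.
- by rewrite EQ.
- by rewrite EQ /= last_map La.
rewrite /plen size_map.
move: Sz; case: (Qi gpx gpy 0 s) EQ => [|x q] //= _; set F := fv _ _; clearbody F; lia.
Qed.

End Graph.

Lemma vtxT (T : finType) (X Y : seq T) dx dy k : vtx X Y dx dy (true, k) = nth dx X k.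
Proof. by []. Qed.
Lemma vtxF (T : finType) (X Y : seq T) dx dy k : vtx X Y dx dy (false, k) = nth dy Y k.
Proof. by []. Qed.

Lemma Rch_trans (A : eqType) (px py : A -> nat) : transitive (Rch px py).
Proof. move=> y x z; rewrite /Rch => /andP [H1 H2] /andP [H3 H4]; apply/andP; split; lia. Qed.

Theorem lemma4p4 (T : finType) (e : rel T) (t D : nat)
  (xt yt : T) (Xs Ys : seq T) (c : 'I_(3 * t) -> T * T) (a : nat) :
  1 <= t -> 1 <= D ->
  simple_graph e ->
  section_pair e (xt :: Xs) (yt :: Ys) ->
  (forall i, chord e (xt :: Xs) (yt :: Ys) (c i)) ->
  (forall i j, i != j -> interlacing (xt :: Xs) (yt :: Ys) (c i) (c j)) ->
  (forall i, a <= chord_length (xt :: Xs) (yt :: Ys) (c i) < a + D) ->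
  exists P : nat -> seq T,
    (forall i, i < t -> H_path_between e (xt :: Xs) (yt :: Ys) xt yt (P i)) /\
    (forall i, i.+1 < t ->
       plen (P i) + 1 <= plen (P i.+1) <= plen (P i) + 2 * D) /\
    plen (P t.-1) >= plen (P 0) + t - 1.
Proof.
move=> Ht HD [Hsym Hirr] [HXp [HYp Hdis]] Hch Hint Hlen.
set X := xt :: Xs in HXp Hdis Hch Hint Hlen *.
set Y := yt :: Ys in HYp Hdis Hch Hint Hlen *.
have uX : uniq X by move: HXp; rewrite /X /= => -[_ ->].
have uY : uniq Y by move: HYp; rewrite /Y /= => -[_ ->].
have Hc1 : forall i, [/\ (c i).1 \in X, (c i).2 \in Y & e (c i).1 (c i).2].
  by move=> i; move: (Hch i) => /and3P.
have Hcinj : injective c.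
  move=> i j E; case: (eqVneq i j) => // /Hint.
  by rewrite /interlacing E eqxx.
have Hpxne : forall i j, i != j -> gpx X (c i) != gpx X (c j).
  move=> i j /Hint /and4P [H1 _ _ _]; apply/eqP => E.
  have [Hi _ _] := Hc1 i; have [Hj _ _] := Hc1 j.
  by move: H1; rewrite (index_inj_mem Hi Hj E) eqxx.
have Hlt : forall i j, i != j -> gpx X (c i) < gpx X (c j) -> gpy Y (c j) < gpy Y (c i).
  move=> i j Hij Hx; move: (Hint i j Hij) => /and4P [_ H2 H3 _].
  have [_ Hi _] := Hc1 i; have [_ Hj _] := Hc1 j.
  have Hne : gpy Y (c j) != gpy Y (c i).
    apply/eqP => E; move: H2; rewrite (index_inj_mem Hj Hi E) eqxx //.
  move: H3; rewrite /gpx /gpy in Hx Hne *; rewrite Hx /= -leqNgt => H3.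
  by rewrite ltn_neqAle Hne H3.
pose cs := sort (fun p q => gpx X p <= gpx X q) [seq c i | i <- enum 'I_(3 * t)].
have Hmem : forall p, p \in cs -> exists i, p = c i.
  by move=> p; rewrite mem_sort => /mapP [i _ ->]; exists i.
have Hucs : uniq cs by rewrite sort_uniq map_inj_uniq ?enum_uniq.
have Hsz : size cs = 3 * t by rewrite size_sort size_map size_enum_ord.
have Hsort : sorted (Rch (gpx X) (gpy Y)) cs.
  have S0 : sorted (fun p q => gpx X p <= gpx X q) cs.
    by apply: sort_sorted => p q; exact: leq_total.
  case Ecs : cs Hucs S0 => [|p0 cs'] // Hu S0.
  apply: (path_sub_uniq Hu) S0 => p q Hp Hq Hpq Hle.
  have [i Ei] := Hmem p ltac:(by rewrite Ecs).
  have [j Ej] := Hmem q ltac:(by rewrite Ecs); subst p q.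
  have Hij : i != j by apply: contra Hpq => /eqP ->.
  have Hx : gpx X (c i) < gpx X (c j) by rewrite ltn_neqAle Hpxne.
  by rewrite /Rch Hx (Hlt i j Hij Hx).
have Hok : all (okc (size X) (size Y) (gpx X) (gpy Y) (gadj e X Y xt yt)) cs.
  apply/allP => p /Hmem [i ->]; have [H1 H2 H3] := Hc1 i.
  rewrite /okc /gadj vtxT vtxF /gpx /gpy !nth_index // !index_mem H1 H2 !andbT.
  rewrite /H_edge H1 H2 H3 !orbT andTb.
  by rewrite -Hsym H3 !orbT.
have Hinr : all (inr (fun p => gpx X p + gpy Y p) a D) cs.
  by apply/allP => p /Hmem [i ->]; rewrite /inr; exact: (Hlen i).
have Hne : cs != [::].
  by apply/eqP => E; move: Hsz; rewrite E /=; lia.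
have [k [g [m [Hmax [Hgk [[Hg1 Hg2] Hszk]]]]]] := chain Hinr Hne.
have Htk : t.-1 <= k by move: Hszk; rewrite Hsz; lia.
pose P := fun i => map (vtx X Y xt yt) (Qi (gpx X) (gpy Y) 0 (g i)).
have HP : forall i, i <= k -> H_path_between e X Y xt yt (P i) /\
    Posz (plen (P i)) = fv (fun p => gpx X p + gpy Y p) (g i).
  move=> i Hi; have [Hs [Ho Ha]] := Hg1 i Hi.
  have Hsorted : sorted (Rch (gpx X) (gpy Y)) (g i).
    exact: (subseq_sorted (@Rch_trans _ (gpx X) (gpy Y)) Hs Hsort).
  have Hok' : all (okc (size X) (size Y) (gpx X) (gpy Y) (gadj e X Y xt yt)) (g i).
    by apply/allP => p /(mem_subseq Hs) Hp; exact: (allP Hok p Hp).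
  have [P1 P2 P3 P4 P5] := @gpath T e X Y xt yt uX uY Hdis (g i) Ho Hsorted Hok'.
  split; last exact: P5.
  by split=> //; split=> //.
exists P; split.
  move=> i Hi; have [] := HP i ltac:(lia); done.
have Hstep : forall i, i.+1 < t -> plen (P i) + 1 <= plen (P i.+1) <= plen (P i) + 2 * D.
  move=> i Hi.
  have [_ E1] := HP i ltac:(lia).
  have [_ E2] := HP i.+1 ltac:(lia).
  have := Hg2 i ltac:(lia).
  rewrite -E1 -E2.
  move: HD; clear; lia.
split=> //.
have : forall i, i < t -> plen (P 0) + i <= plen (P i).
  elim=> [|i IH] Hi; first by rewrite addn0.
  have := Hstep i Hi; have := IH (ltnW Hi); lia.
move=> /(_ t.-1); move: Ht; clear; move=> Ht H; have := H ltac:(lia); lia.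
Qed.
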